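(* For every prime power $k$, there exists a hypergraph $\widehat{\mathcal{A}_k}=(V,E)$ (obtained from the field plane $\mathcal{A}_k$ by deleting $k-1$ pairwise parallel lines) which is linear and $k$-uniform with $|V|=k^2$, $|E|=k^2+1$, having a hyperedge $e_0$ with $\mathrm{deg}(x)=k+1$ for all $x\in e_0$ and $\mathrm{deg}(x)\ge k$ for all $x\in V\smallsetminus e_0$, and such that: (i) $\mathrm{q}(\widehat{\mathcal{A}_k})=k+1$; (ii) $\widehat{\mathcal{A}_k}$ is not maximal for inclusion among linear $k$-uniform hypergraphs on the same $k^2$ vertices (some hyperedge can be added preserving linearity and $k$-uniformity); (iii) $\widehat{\mathcal{A}_k}$ has exactly one critical hyperedge, namely the unique hyperedge $e_0$ with the degree properties above.
   Context: For a prime power $k$, the field plane $\mathcal{A}_k$ is the hypergraph with vertex set $\mathbb{F}_k^2$ whose hyperedges are the $k^2+k$ affine lines of $\mathbb{F}_k^2$. A hypergraph $(V,E)$ is linear if distinct hyperedges share at most one vertex, $k$-uniform if every hyperedge has $k$ elements; $\mathrm{deg}(x)$ is the number of hyperedges containing $x$. The chromatic index $\mathrm{q}$ is the least number of colors in a coloring of hyperedges where distinct intersecting hyperedges get different colors. A hyperedge $e$ is critical if $\mathrm{q}((V,E\smallsetminus\{e\}))=\mathrm{q}((V,E))-1$. *)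

(* Defs.v *)
From mathcomp Require Import all_boot all_order all_algebra all_field.
Set Implicit Arguments. Unset Strict Implicit. Unset Printing Implicit Defensive.
Import GRing.Theory.
Local Open Scope ring_scope.

Definition prime_power (k : nat) : Prop :=
  exists p n : nat, prime p /\ (0 < n)%N /\ k = (p ^ n)%N.

Section Hypergraphs.
Variable T : finType.

(* A hypergraph on vertex set T is given by its set of hyperedges E. *)
Definition linear_hg (E : {set {set T}}) : Prop :=
  forall e f, e \in E -> f \in E -> e != f -> (#|e :&: f| <= 1)%N.

Definition uniform_hg (k : nat) (E : {set {set T}}) : Prop :=
  forall e, e \in E -> #|e| = k.

Definition hdeg (E : {set {set T}}) (x : T) : nat := #|[set e in E | x \in e]|.

Definition colorable (E : {set {set T}}) (n : nat) : bool :=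
  [exists c : {ffun {set T} -> 'I_n},
     [forall e in E, forall f in E,
        ((e != f) && (e :&: f != set0)) ==> (c e != c f)]].

Lemma colorable_exists (E : {set {set T}}) : exists n, colorable E n.
Proof.
exists #|{set T}|; apply/existsP; exists [ffun e => enum_rank e].
apply/forall_inP => e _; apply/forall_inP => f _; apply/implyP => /andP[nef _].
by rewrite !ffunE; apply: contra nef => /eqP /enum_rank_inj ->.
Qed.

Definition chromatic_index (E : {set {set T}}) : nat :=
  ex_minn (colorable_exists E).

Definition critical (E : {set {set T}}) (e : {set T}) : Prop :=
  e \in E /\ chromatic_index (E :\ e) = (chromatic_index E).-1.

End Hypergraphs.

Section FieldPlane.
Variable F : finFieldType.

Definition aline (a b c : F) : {set F * F} :=
  [set p : F * F | a * p.1 + b * p.2 == c].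

Definition field_plane : {set {set F * F}} :=
  [set aline t.1.1 t.1.2 t.2 | t in [set t : F * F * F | t.1 != (0, 0)]].

Definition parallel (l m : {set F * F}) : bool := (l == m) || [disjoint l & m].

End FieldPlane.

(* Main.v *)
Require Import Defs.
From mathcomp Require Import all_boot all_order all_algebra all_field.
From mathcomp Require Import ring.
Set Implicit Arguments. Unset Strict Implicit. Unset Printing Implicit Defensive.
Import GRing.Theory.
Local Open Scope ring_scope.

Section Plane.
Variable F : finFieldType.
Implicit Types (m b c : F) (p : F * F).

Definition vl c : {set F * F} := aline 1 0 c.
Definition nl m b : {set F * F} := aline (- m) 1 b.

Lemma in_vl c p : (p \in vl c) = (p.1 == c).
Proof. by rewrite inE mul1r mul0r addr0. Qed.

Lemma in_nl m b p : (p \in nl m b) = (p.2 == m * p.1 + b).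
Proof.
rewrite inE; apply/eqP/eqP => H.
  by rewrite -H; ring.
by rewrite H; ring.
Qed.

Lemma vl_inj : injective vl.
Proof.
move=> c d H; have : (c, 0) \in vl d by rewrite -H in_vl.
by rewrite in_vl => /eqP.
Qed.

Lemma nl_inj m b m' b' : nl m b = nl m' b' -> m = m' /\ b = b'.
Proof.
move=> H.
have h0 : ((0 : F), b) \in nl m' b' by rewrite -H in_nl mulr0 add0r.
have h1 : ((1 : F), m + b) \in nl m b by rewrite in_nl mulr1.
rewrite H in_nl /= in h1; rewrite in_nl /= mulr0 add0r in h0.
move/eqP: h0 => h0; subst b'; move/eqP: h1; rewrite mulr1 => /addIr; by [].
Qed.

Lemma vl_neq_nl c m b : vl c != nl m b.
Proof.
apply/eqP => H.
have h0 : (c, m * c + b) \in vl c by rewrite in_vl.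
have h1 : (c, m * c + b + 1) \in vl c by rewrite in_vl.
rewrite H !in_nl /= in h0 h1.
move: h1; rewrite -subr_eq0 addrAC subrr add0r oner_eq0.
by [].
Qed.

Lemma line_cases (a b c : F) : (a, b) != (0, 0) ->
  (exists d, aline a b c = vl d) \/ (exists m b', aline a b c = nl m b').
Proof.
move=> nz; have [b0|bn0] := eqVneq b 0.
  subst b; have an0 : a != 0 by apply: contra nz => /eqP ->.
  left; exists (c / a); apply/setP => p; rewrite in_vl inE mul0r addr0.
  apply/eqP/eqP => H; first by rewrite -H; field.
  by rewrite H; field.
right; exists (- a / b), (c / b); apply/setP => p; rewrite in_nl inE.
apply/eqP/eqP => H; first by rewrite -H; field.
by rewrite H; field.
Qed.

Lemma vl_in c : vl c \in field_plane F.
Proof.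
apply/imsetP; exists ((1, 0), c) => //; rewrite inE /=.
by rewrite xpair_eqE oner_eq0.
Qed.

Lemma nl_in m b : nl m b \in field_plane F.
Proof.
apply/imsetP; exists ((- m, 1), b) => //; rewrite inE /=.
by rewrite xpair_eqE oner_eq0 andbF.
Qed.

Lemma fp_cases l : l \in field_plane F ->
  (exists d, l = vl d) \/ (exists m b', l = nl m b').
Proof. by case/imsetP => -[[a b] c]; rewrite inE /= => nz ->; apply: line_cases. Qed.


Lemma two_points l1 l2 p q : l1 \in field_plane F -> l2 \in field_plane F ->
  p \in l1 -> q \in l1 -> p \in l2 -> q \in l2 -> p != q -> l1 = l2.
Proof.
case: p q => [x1 y1] [x2 y2] h1 h2.
have pq : x1 = x2 -> y1 = y2 -> (x1, y1) != (x2, y2) -> False.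
  by move=> -> ->; rewrite eqxx.
case: (fp_cases h1) => [[c ->]|[m [b ->]]];
case: (fp_cases h2) => [[d ->]|[m' [b' ->]]];
rewrite ?in_vl ?in_nl /= => /eqP a1 /eqP a2 /eqP a3 /eqP a4 npq.
- by rewrite -a1 -a3.
- by exfalso; apply: pq npq; [rewrite a1 a2 | rewrite a3 a4 a1 a2].
- by exfalso; apply: pq npq; [rewrite a3 a4 | rewrite a1 a2 a3 a4].
- have [ex|nx] := eqVneq x1 x2.
    by exfalso; apply: pq npq => //; rewrite a1 a2 ex.
  subst y1 y2.
  have H : (m - m') * (x1 - x2) = 0.
    transitivity ((m * x1 + b - (m' * x1 + b')) - (m * x2 + b - (m' * x2 + b'))).
      by ring.
    by rewrite a3 a4 !subrr.
  move/eqP: H; rewrite mulf_eq0 !subr_eq0 (negbTE nx) orbF => /eqP em.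
  subst m'; move/addrI: a3 => ->; by [].
Qed.

Lemma fp_linear : linear_hg (field_plane F).
Proof.
move=> e f he hf nef; apply/card_le1_eqP => p q; rewrite !inE.
move=> /andP[pe pf] /andP[qe qf]; apply/eqP; apply/negPn/negP => npq.
by move: nef; rewrite (two_points he hf qe pe qf pf npq) eqxx.
Qed.

Lemma linear_sub (T : finType) (E E' : {set {set T}}) :
  E' \subset E -> linear_hg E -> linear_hg E'.
Proof. by move=> /subsetP s L e f he hf; apply: L; apply: s. Qed.

Definition DD : {set {set F * F}} := [set vl c | c in [set c : F | c != 0]].
Definition NL : {set {set F * F}} := [set nl t.1 t.2 | t : F * F].
Definition EE := field_plane F :\: DD.

Lemma vl0_notin_DD : vl 0 \notin DD.
Proof. by apply/imsetP => -[c]; rewrite inE => cn0 /vl_inj H; rewrite H eqxx in cn0. Qed.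

Lemma nl_notin_DD m b : nl m b \notin DD.
Proof. by apply/imsetP => -[c _ H]; move: (vl_neq_nl c m b); rewrite H eqxx. Qed.

Lemma vl0_notin_NL : vl 0 \notin NL.
Proof. by apply/imsetP => -[t _ H]; move: (vl_neq_nl 0 t.1 t.2); rewrite H eqxx. Qed.

Lemma nl_in_NL m b : nl m b \in NL.
Proof. by apply/imsetP; exists (m, b). Qed.

Lemma EE_eq : EE = vl 0 |: NL.
Proof.
apply/setP => e; rewrite /EE inE in_setU1; apply/idP/idP.
  case/andP => nD fp; move: nD; case: (fp_cases fp) => [[d ->]|[m [b ->]]] nD.
    have [->|dn0] := eqVneq d 0; first by rewrite eqxx.
    by case/negP: nD; apply/imsetP; exists d; rewrite ?inE.
  by apply/orP; right; apply: nl_in_NL.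
case/orP => [/eqP ->|/imsetP [t _ ->]].
  by rewrite vl0_notin_DD vl_in.
by rewrite nl_notin_DD nl_in.
Qed.

Lemma EE_cases e : e \in EE -> e = vl 0 \/ exists m b, e = nl m b.
Proof.
rewrite EE_eq in_setU1 => /orP [/eqP ->|/imsetP [t _ ->]]; first by left.
by right; exists t.1, t.2.
Qed.

Lemma vl0_in_EE : vl 0 \in EE.
Proof. by rewrite EE_eq setU11. Qed.

Lemma nl_in_EE m b : nl m b \in EE.
Proof. by rewrite EE_eq in_setU1 nl_in_NL orbT. Qed.

Lemma card_vl c : #|vl c| = #|F|.
Proof.
have -> : vl c = [set (c, y) | y : F].
  apply/setP => -[x y]; rewrite in_vl /=; apply/eqP/imsetP => [->|[y' _ [-> _]]] //.
  by exists y.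
by rewrite card_imset ?cardsT // => y y' [].
Qed.

Lemma card_nl m b : #|nl m b| = #|F|.
Proof.
have -> : nl m b = [set (x, m * x + b) | x : F].
  apply/setP => -[x y]; rewrite in_nl /=; apply/eqP/imsetP => [->|[x' _ [-> ->]]] //.
  by exists x.
by rewrite card_imset ?cardsT // => y y' [].
Qed.

Lemma card_DD : #|DD| = #|F|.-1.
Proof.
rewrite card_imset; last exact: vl_inj.
have -> : [set c : F | c != 0] = [set~ 0] by apply/setP => c; rewrite !inE.
by rewrite cardsC1.
Qed.

Lemma card_NL : #|NL| = (#|F| * #|F|)%N.
Proof.
rewrite card_imset ?cardsT ?card_prod //.
by move=> [m b] [m' b'] /nl_inj /= [-> ->].
Qed.

Lemma card_EE : #|EE| = (#|F| ^ 2).+1.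
Proof. by rewrite EE_eq cardsU1 vl0_notin_NL card_NL mulnn. Qed.

Definition Lp p : {set {set F * F}} := [set nl m (p.2 - m * p.1) | m : F].

Lemma card_Lp p : #|Lp p| = #|F|.
Proof. by rewrite card_imset ?cardsT // => m m' /nl_inj []. Qed.

Lemma vl0_notin_Lp p : vl 0 \notin Lp p.
Proof. by apply/imsetP => -[t _ H]; move: (vl_neq_nl 0 t (p.2 - t * p.1)); rewrite H eqxx. Qed.

Lemma hdeg_EE p : hdeg EE p = ((p.1 == 0%R) + #|F|)%N.
Proof.
have key : forall e, (e \in NL) && (p \in e) = (e \in Lp p).
  move=> e; apply/andP/imsetP => [[/imsetP [t _ ->] hp]|[m _ ->]].
    exists t.1 => //; congr nl; rewrite in_nl in hp; rewrite (eqP hp); ring.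
  split; first exact: nl_in_NL.
  by rewrite in_nl; apply/eqP; ring.
rewrite /hdeg.
have -> : [set e in EE | p \in e] = if p.1 == 0 then vl 0 |: Lp p else Lp p.
  apply/setP => e; rewrite inE EE_eq in_setU1 andb_orl key.
  case: eqP => [->|/eqP ne].
    by rewrite in_vl; case: ifP => h; rewrite ?in_setU1 ?eqxx ?h //=.
  by case: ifP => h; rewrite ?in_setU1 ?(negbTE ne).
by case: ifP => h; rewrite ?cardsU1 ?vl0_notin_Lp card_Lp.
Qed.


Definition slope (e : {set F * F}) : F :=
  if [pick t : F * F | e == nl t.1 t.2] is Some t then t.1 else 0.

Lemma slope_nl m b : slope (nl m b) = m.
Proof.
rewrite /slope; case: pickP => [t /eqP H|H].
  by case: (nl_inj H).
by move: (H (m, b)); rewrite eqxx.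
Qed.

Lemma nl_meet m b m' b' : nl m b != nl m' b' -> nl m b :&: nl m' b' != set0 ->
  m != m'.
Proof.
move=> ne /set0Pn [p]; rewrite inE !in_nl => /andP [/eqP h1 /eqP h2].
apply/eqP => em; subst m'; move: ne; rewrite h1 in h2; move/addrI: h2 => ->.
by rewrite eqxx.
Qed.

End Plane.

Section Colour.
Variable T : finType.
Implicit Types E : {set {set T}}.

Lemma col_sub E E' n : E' \subset E -> colorable E n -> colorable E' n.
Proof.
move=> /subsetP s /existsP [c /forall_inP H]; apply/existsP; exists c.
apply/forall_inP => e he; apply/forall_inP => f hf.
by move: (H e (s e he)) => /forall_inP; apply; apply: s.
Qed.

Lemma col_lower E (S : {set {set T}}) (x : T) n : S \subset E -> (forall e, e \in S -> x \in e) ->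
  colorable E n -> (#|S| <= n)%N.
Proof.
move=> /subsetP s hx /existsP [c /forall_inP H].
suff inj : {in S &, injective c}.
  by rewrite -(card_in_imset inj); apply: leq_trans (max_card _) _; rewrite card_ord.
move=> e f he hf ec; apply/eqP; apply/negPn/negP => nef.
have : (e != f) && (e :&: f != set0).
  by rewrite nef /=; apply/set0Pn; exists x; rewrite inE !hx.
by move: (H e (s e he)) => /forall_inP /(_ f (s f hf)) /implyP /[apply]; rewrite ec eqxx.
Qed.

Lemma chi_eq E n : colorable E n -> (forall m, colorable E m -> (n <= m)%N) ->
  chromatic_index E = n.
Proof.
move=> c mn; rewrite /chromatic_index; case: ex_minnP => m cm mmin.
by apply/eqP; rewrite eqn_leq mmin // mn.
Qed.

End Colour.

Section Main.
Variable F : finFieldType.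

Lemma EEnl_cases e : e \in EE F -> e != vl 0 -> exists m b, e = nl m b.
Proof. by move=> /EE_cases [->|//]; rewrite eqxx. Qed.

Lemma col_k : colorable (EE F :\ vl 0) #|F|.
Proof.
apply/existsP; exists [ffun e => enum_rank (slope e)].
apply/forall_inP => e he; apply/forall_inP => f hf; apply/implyP => /andP [nef nI].
move: he hf; rewrite !in_setD1 => /andP [e0 he] /andP [f0 hf].
case: (EEnl_cases he e0) => m [b em]; case: (EEnl_cases hf f0) => m' [b' fm].
subst e f; rewrite !ffunE !slope_nl (inj_eq enum_rank_inj).
exact: nl_meet nef nI.
Qed.

Lemma col_k1 : colorable (EE F) #|F|.+1.
Proof.
apply/existsP.
exists [ffun e => if e == vl 0 then ord_max else widen_ord (leqnSn _) (enum_rank (slope e))].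
apply/forall_inP => e he; apply/forall_inP => f hf; apply/implyP => /andP [nef nI].
rewrite !ffunE.
have [e0|e0] := eqVneq e (vl 0); have [f0|f0] := eqVneq f (vl 0).
- by rewrite e0 f0 eqxx in nef.
- apply/eqP => /(congr1 val) /= H; move: (ltn_ord (enum_rank (slope f))).
  by rewrite -H ltnn.
- apply/eqP => /(congr1 val) /= H; move: (ltn_ord (enum_rank (slope e))).
  by rewrite H ltnn.
case: (EEnl_cases he e0) => m [b em]; case: (EEnl_cases hf f0) => m' [b' fm].
subst e f; apply/eqP => /(congr1 val) /= /val_inj /enum_rank_inj.
rewrite !slope_nl => em; move: (nl_meet nef nI); by rewrite em eqxx.
Qed.

Definition Sb b : {set {set F * F}} := [set nl m b | m : F].

Lemma card_Sb b : #|Sb b| = #|F|.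
Proof. by rewrite card_imset ?cardsT // => m m' /nl_inj []. Qed.

Lemma vl0_notin_Sb b : vl 0 \notin Sb b.
Proof. by apply/imsetP => -[t _ H]; move: (vl_neq_nl 0 t b); rewrite H eqxx. Qed.

Lemma Sb_pt b e : e \in Sb b -> ((0 : F), b) \in e.
Proof. by case/imsetP => m _ ->; rewrite in_nl /= mulr0 add0r. Qed.

Lemma low_E n : colorable (EE F) n -> (#|F|.+1 <= n)%N.
Proof.
move=> c; have := col_lower (S := vl 0 |: Sb 0) (x := (0, 0)) _ _ c.
rewrite cardsU1 vl0_notin_Sb card_Sb; apply.
  apply/subsetP => e; rewrite in_setU1 => /orP [/eqP ->|/imsetP [m _ ->]].
    exact: vl0_in_EE.
  exact: nl_in_EE.
by move=> e; rewrite in_setU1 => /orP [/eqP ->|/Sb_pt //]; rewrite in_vl.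
Qed.

Lemma low_E0 n : colorable (EE F :\ vl 0) n -> (#|F| <= n)%N.
Proof.
move=> c; have := col_lower (S := Sb 0) (x := (0, 0)) _ _ c.
rewrite card_Sb; apply; last by move=> e /Sb_pt.
apply/subsetP => e /imsetP [m _ ->]; rewrite in_setD1 nl_in_EE andbT.
by rewrite eq_sym vl_neq_nl.
Qed.

Lemma low_Enl m b n : colorable (EE F :\ nl m b) n -> (#|F|.+1 <= n)%N.
Proof.
move=> c; have := col_lower (S := vl 0 |: Sb (b + 1)) (x := (0, b + 1)) _ _ c.
rewrite cardsU1 vl0_notin_Sb card_Sb; apply.
  apply/subsetP => e; rewrite in_setU1 => /orP [/eqP ->|/imsetP [m' _ ->]].
    by rewrite in_setD1 vl0_in_EE vl_neq_nl.
  rewrite in_setD1 nl_in_EE andbT; apply/eqP => /nl_inj [_] /eqP.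
  by rewrite -subr_eq0 addrAC subrr add0r oner_eq0.
by move=> e; rewrite in_setU1 => /orP [/eqP ->|/Sb_pt //]; rewrite in_vl.
Qed.

Lemma chi_E : chromatic_index (EE F) = #|F|.+1.
Proof. exact: chi_eq col_k1 low_E. Qed.

Lemma chi_E0 : chromatic_index (EE F :\ vl 0) = #|F|.
Proof. exact: chi_eq col_k low_E0. Qed.

Lemma chi_Enl m b : chromatic_index (EE F :\ nl m b) = #|F|.+1.
Proof.
apply: chi_eq (low_Enl (m := m) (b := b)).
by apply: col_sub col_k1; apply: subD1set.
Qed.

End Main.

Lemma main_F (F : finFieldType) (k := #|F|) :
  exists D : {set {set F * F}},
    [/\ D \subset field_plane F, #|D| = k.-1,
        {in D &, forall l m, parallel l m} &
    let E := field_plane F :\: D in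
    [/\ linear_hg E, uniform_hg k E, #|[set: F * F]| = (k ^ 2)%N, #|E| = (k ^ 2).+1 &
    exists e0,
      let P := fun e => [/\ e \in E,
                         (forall x, x \in e -> hdeg E x = k.+1) &
                         (forall x, x \notin e -> (k <= hdeg E x)%N)] in
      [/\ P e0, (forall e, P e -> e = e0),
          chromatic_index E = k.+1,
          (exists f : {set F * F}, [/\ f \notin E, #|f| = k & linear_hg (f |: E)]) &
          (forall e, critical E e <-> e = e0)]]].
Proof.
rewrite /k; exists (DD F); split.
- by apply/subsetP => l /imsetP [c _ ->]; exact: vl_in.
- exact: card_DD.
- move=> l l' /imsetP [c _ ->] /imsetP [d _ ->]; rewrite /parallel.
  have [->|ncd] := eqVneq c d; first by rewrite eqxx.
  apply/orP; right; rewrite -setI_eq0; apply/eqP/setP => p.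
  rewrite in_setI in_set0 !in_vl; apply/negbTE; apply/negP => /andP [/eqP -> /eqP H].
  by rewrite H eqxx in ncd.
cbv zeta; rewrite -/(EE F); split.
- by apply: (linear_sub (E := field_plane F)); [exact: subsetDl | exact: fp_linear].
- by move=> e /EE_cases [->|[m [b ->]]]; rewrite ?card_vl ?card_nl.
- by rewrite cardsT card_prod mulnn.
- exact: card_EE.
exists (vl 0); split.
- split; first exact: vl0_in_EE.
    by move=> x; rewrite hdeg_EE in_vl => ->.
  by move=> x _; rewrite hdeg_EE leq_addl.
- move=> e [he h1 _]; case: (EE_cases he) => [//|[m [b em]]]; subst e.
  have := h1 (1, m * 1 + b); rewrite in_nl eqxx hdeg_EE /= oner_eq0 => /(_ isT).
  by move=> /eqP; rewrite add0n eq_sym -addn1 -{2}[#|F|]addn0 eqn_add2l.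
- exact: chi_E.
- exists (vl 1); split.
  + rewrite /EE inE negb_and negbK; apply/orP; left.
    by apply/imsetP; exists 1; rewrite ?inE ?oner_eq0.
  + exact: card_vl.
  + apply: (linear_sub (E := field_plane F)); last exact: fp_linear.
    apply/subsetP => e; rewrite in_setU1.
    by case/orP => [/eqP ->|]; [exact: vl_in | rewrite inE => /andP []].
- move=> e; split.
  + case=> he; case: (EE_cases he) => [//|[m [b ->]]].
    by rewrite chi_Enl chi_E /= => /esym /n_Sn [].
  + by move=> ->; split; [exact: vl0_in_EE | rewrite chi_E0 chi_E].
Qed.

Local Close Scope ring_scope.

Theorem proposition4p2 (k : nat) (hk : prime_power k) :
  exists F : finFieldType, #|F| = k /\
  exists D : {set {set F * F}},
    [/\ D \subset field_plane F, #|D| = k.-1,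
        {in D &, forall l m, parallel l m} &
    let E := field_plane F :\: D in
    [/\ linear_hg E, uniform_hg k E, #|[set: F * F]| = (k ^ 2)%N, #|E| = (k ^ 2).+1 &
    exists e0,
      let P := fun e => [/\ e \in E,
                         (forall x, x \in e -> hdeg E x = k.+1) &
                         (forall x, x \notin e -> (k <= hdeg E x)%N)] in
      [/\ P e0, (forall e, P e -> e = e0),
          chromatic_index E = k.+1,
          (exists f : {set F * F}, [/\ f \notin E, #|f| = k & linear_hg (f |: E)]) &
          (forall e, critical E e <-> e = e0)]]].
Proof.
case: hk => p [n [pp [n0 ->]]].
case: (pPrimePowerField pp n0) => Fm _ cF.
exists Fm; split; first exact: cF.
rewrite -cF; exact: main_F.
Qed.
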